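(* Let $I$ be a resident-minimal instance and $(r_0,h_0)\in\mathrm{tent}(I)\setminus\mathrm{pend}(I)$. Then there is a (general) prescription $(P,X)$ for $I$ with $(r_0,h_0)\in\mathrm{tgs}(P,X)$ if and only if there is a resident-changeless and hospital-complete extension $I'$ of $I$ and a prescription $(P,Y)$ for $I'$ with $(r_0,h_0)\in\mathrm{tgs}(P,Y)$.
   Context: An instance $I$ consists of finite disjoint sets $R$ (residents) and $H$ (hospitals), a positive integer quota $q_h$ for each $h\in H$, for each $r\in R$ a preference list of $r$ (a sequence of distinct members of $H$, not necessarily all), and for each $h\in H$ a preference list of $h$ (a sequence of distinct members of $R$). Instances considered together share $R,H$ and quotas. A list is complete if it contains every member of the opposite side; an instance is hospital-complete if every hospital's list is complete. A match is a pair $(r,h)\in R\times H$. For a set $M$ of matches, $\mathrm{res}_h M=\{r:(r,h)\in M\}$, $\mathrm{res}\,M=\{r:(r,h)\in M\text{ for some }h\}$. $J$ is an extension of $I$ if every list of $J$ has the corresponding list of $I$ as a prefix; it is resident-changeless if every resident's list is the same in $I$ and $J$. An event is $(r,h)^+$ (proposal) or $(r,h)^-$ (rejection). For an event sequence $\sigma$, $\mathrm{prop}(\sigma)$, $\mathrm{rej}(\sigma)$ are the sets of matches proposed/rejected in $\sigma$, $\mathrm{tent}(\sigma)=\mathrm{prop}(\sigma)\setminus\mathrm{rej}(\sigma)$, and $\mathrm{pend}_I(\sigma)$ is the set of $(r,h)\in\mathrm{tent}(\sigma)$ with $r$ not on the list of $h$ in $I$. A match $(r,h)\in M$ is ousted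 from $M$ in $I$ if the list of $h$ in $I$ contains at least $q_h$ residents of $\mathrm{res}_h M$ and either $r$ is not on it or $r$ is preceded on it by at least $q_h$ residents of $\mathrm{res}_h M$. $I$-feasible sequences: the empty sequence is $I$-feasible; if $\sigma$ is $I$-feasible then $\sigma+(r,h)^+$ is $I$-feasible if $r\notin\mathrm{res}\,\mathrm{tent}(\sigma)$, $(r,h)\notin\mathrm{prop}(\sigma)$, $h$ is on the list of $r$ in $I$ and $(r,h')\in\mathrm{rej}(\sigma)$ for every $h'$ preceding $h$ on it; and $\sigma+(r,h)^-$ is $I$-feasible if $(r,h)$ is ousted from $\mathrm{prop}(\sigma)$ in $I$ and $(r,h)\notin\mathrm{rej}(\sigma)$. All maximal $I$-feasible sequences contain the same events; $\mathrm{prop}(I),\mathrm{rej}(I),\mathrm{tent}(I),\mathrm{pend}(I)$ denote $\mathrm{prop}(\sigma),\mathrm{rej}(\sigma),\mathrm{tent}(\sigma),\mathrm{pend}_I(\sigma)$ for any maximal $I$-feasible $\sigma$. $I$ is resident-minimal if $\mathrm{prop}(I)$ equals the set of matches $(r,h)$ with $h$ on the list of $r$ in $I$. For a resident-minimal instance $I$, a (general) prescription for $I$ is a pair $(P,X)$ of sets of matches such that: (P1) $P\cap\mathrm{prop}(I)=\emptyset$; (P2) for each $r\in R$ there is at most one $h$ with $(r,h)\in P$; (P3) $X\subseteq\mathrm{tent}(I)$; (P4) $\mathrm{res}\,P\cap\mathrm{res}\,\mathrm{tent}(I)\subseteq\mathrm{res}\,X$; (P5) for each $h$, $|\mathrm{res}_h(P\cup(\mathrm{tent}(I)\setminus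 X))|\le q_h$, with equality if $\mathrm{res}_h X\ne\emptyset$; (P6') for each $h$, every member of $\mathrm{res}_h(P\cup((\mathrm{tent}(I)\setminus\mathrm{pend}(I))\setminus X))$ precedes all members of $\mathrm{res}_h(X\setminus\mathrm{pend}(I))$ in the list of $h$ in $I$, and if $\mathrm{res}_h(X\setminus\mathrm{pend}(I))\ne\emptyset$ then $\mathrm{res}_h\,\mathrm{pend}(I)\subseteq\mathrm{res}_h X$. When $I$ is moreover hospital-complete (so $\mathrm{pend}(I)=\emptyset$), (P6') reads: (P6) every member of $\mathrm{res}_h(P\cup(\mathrm{tent}(I)\setminus X))$ precedes all members of $\mathrm{res}_h X$ in the list of $h$. The target set is $\mathrm{tgs}(P,X)=\{(r,h)\in X: r\notin\mathrm{res}\,P\}$. *)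

(* Defs.v *)
From Stdlib Require Import ClassicalEpsilon.
From mathcomp Require Import all_boot.

Set Implicit Arguments.
Unset Strict Implicit.
Unset Printing Implicit Defensive.

Definition pb (P : Prop) : bool :=
  if excluded_middle_informative P then true else false.

Section Defs.
Variables (R H : finType).

(* Residents and hospitals are the (disjoint) finite types
   R and H; quotas q : H -> nat are shared and passed separately. *)
Record instance := Instance {
  rlist : R -> seq H;
  hlist : H -> seq R;
  rlist_uniq : forall r, uniq (rlist r);
  hlist_uniq : forall h, uniq (hlist h) }.

Definition match_t := (R * H)%type.

Definition resh (h : H) (M : {set match_t}) : {set R} := [set r | (r, h) \in M].
Definition resS (M : {set match_t}) : {set R} := [set r | [exists h, (r, h) \in M]].

(* events: (true, m) is the proposal m^+, (false, m) the rejection m^- *)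
Definition event := (bool * match_t)%type.

Definition propS (s : seq event) : {set match_t} := [set m | (true, m) \in s].
Definition rejS (s : seq event) : {set match_t} := [set m | (false, m) \in s].
Definition tentS (s : seq event) : {set match_t} := propS s :\: rejS s.
Definition pendS (I : instance) (s : seq event) : {set match_t} :=
  [set m in tentS s | m.1 \notin hlist I m.2].

Variable q : H -> nat.

Definition ousted (I : instance) (M : {set match_t}) (m : match_t) : bool :=
  let: (r, h) := m in
  let L := hlist I h in
  let c := fun s : seq R => count (fun r' => (r', h) \in M) s in
  [&& m \in M, q h <= c L & (r \notin L) || (q h <= c (take (index r L) L))].

Definition step_ok (I : instance) (s : seq event) (e : event) : bool :=
  let: (b, (r, h)) := e in
  if b then
    [&& r \notin resS (tentS s), (r, h) \notin propS s, h \in rlist I r &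
        all (fun h' => (r, h') \in rejS s) (take (index h (rlist I r)) (rlist I r))]
  else ousted I (propS s) (r, h) && ((r, h) \notin rejS s).

Fixpoint feasible_from (I : instance) (pre s : seq event) : bool :=
  match s with
  | [::] => true
  | e :: s' => step_ok I pre e && feasible_from I (rcons pre e) s'
  end.

Definition feasible (I : instance) (s : seq event) : bool := feasible_from I [::] s.

Definition maximal (I : instance) (s : seq event) : bool :=
  feasible I s && [forall e : event, ~~ feasible I (rcons s e)].

(* prop(I), rej(I), tent(I), pend(I): computed from a maximal I-feasible
   sequence (all maximal sequences contain the same events). *)
Definition propI (I : instance) : {set match_t} :=
  [set m | pb (exists s, maximal I s /\ m \in propS s)].
Definition rejI (I : instance) : {set match_t} :=
  [set m | pb (exists s, maximal I s /\ m \in rejS s)].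
Definition tentI (I : instance) : {set match_t} := propI I :\: rejI I.
Definition pendI (I : instance) : {set match_t} :=
  [set m in tentI I | m.1 \notin hlist I m.2].

Definition resident_minimal (I : instance) : Prop :=
  forall r h, ((r, h) \in propI I) = (h \in rlist I r).

Definition hospital_complete (I : instance) : Prop :=
  forall h r, r \in hlist I h.

Definition extension (I J : instance) : Prop :=
  (forall r, prefix (rlist I r) (rlist J r)) /\
  (forall h, prefix (hlist I h) (hlist J h)).

Definition resident_changeless (I J : instance) : Prop :=
  forall r, rlist J r = rlist I r.

Definition precedes (L : seq R) (a b : R) : bool :=
  (a \in L) && (index a L < index b L).

Definition prescription (I : instance) (P X : {set match_t}) : Prop :=
  let T := tentI I in
  let D := pendI I in
  [/\ P :&: propI I = set0,
      (forall r h h', (r, h) \in P -> (r, h') \in P -> h = h'),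
      X \subset T,
      resS P :&: resS T \subset resS X
    & [/\ (forall h, #|resh h (P :|: (T :\: X))| <= q h /\
                (resh h X != set0 -> #|resh h (P :|: (T :\: X))| = q h))
        & (forall h,
      (forall a b, a \in resh h (P :|: ((T :\: D) :\: X)) ->
                   b \in resh h (X :\: D) -> precedes (hlist I h) a b) /\
      (resh h (X :\: D) != set0 -> resh h D \subset resh h X))]].

Definition tgs (P X : {set match_t}) : {set match_t} :=
  [set m in X | m.1 \notin resS P].

End Defs.

(* Main.v *)
Require Import Defs.
From Stdlib Require Import ClassicalEpsilon.
From mathcomp Require Import all_boot zify.

Set Implicit Arguments.
Unset Strict Implicit.
Unset Printing Implicit Defensive.

Section Seqs.
Variable T : finType.

Lemma prec_cat_l (L s : seq T) a b : precedes L a b -> precedes (L ++ s) a b.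
Proof.
rewrite /precedes mem_cat => /andP[aL lt]; rewrite aL /= !index_cat aL.
by case: ifP => // _; apply: ltn_addr; rewrite index_mem.
Qed.

Lemma prec_cat_in (L s : seq T) a b : a \in L -> b \notin L -> precedes (L ++ s) a b.
Proof.
move=> aL bL; rewrite /precedes mem_cat aL /= !index_cat aL (negbTE bL).
by apply: ltn_addr; rewrite index_mem.
Qed.

Lemma prec_cat_back (L s : seq T) a b : b \in L -> precedes (L ++ s) a b ->
  (a \in L) && precedes L a b.
Proof.
move=> bL; rewrite /precedes mem_cat !index_cat bL => /andP[_].
case aL: (a \in L) => /=; first by [].
move=> lt; have hb : index b L < size L by rewrite index_mem.
lia.
Qed.

Lemma count_le_card (p : pred T) (s : seq T) (A : {set T}) :
  uniq s -> (forall x, x \in s -> p x -> x \in A) -> count p s <= #|A|.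
Proof.
move=> us hA; rewrite -size_filter -(card_uniqP (filter_uniq p us)).
apply: subset_leq_card; apply/subsetP => x; rewrite mem_filter => /andP[px xs].
exact: hA.
Qed.

End Seqs.

Lemma count_first (T : eqType) (p : pred T) (s : seq T) n : uniq s ->
  count (fun x => p x && (count p (take (index x s) s) < n)) s = minn n (count p s).
Proof.
elim: s n => [|y s IH] n /=; first by rewrite minn0.
case/andP => ys us.
rewrite eqxx /=.
have -> : count (fun x => p x && (count p (take (index x (y :: s)) (y :: s)) < n)) s =
          count (fun x => p x && (count p (take (index x s) s) < n - p y)) s.
  apply: eq_in_count => x xs /=.
  have -> : (y == x) = false by apply/negbTE; apply: contraNneq ys => ->.
  by rewrite /= ltn_subRL.
rewrite IH //; case: (p y) => /=; last by rewrite subn0 add0n.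
case: n => [|n] /=; first by rewrite !min0n.
by rewrite subn1 /= add1n minnSS.
Qed.


Section Dyn.
Variables (R H : finType) (q : H -> nat).

Lemma feasible_rcons (I : instance R H) pre s e :
  feasible_from q I pre (rcons s e) =
  feasible_from q I pre s && step_ok q I (pre ++ s) e.
Proof.
elim: s pre => [|x s IH] pre /=; first by rewrite cats0 andbT.
by rewrite IH cat_rcons andbA.
Qed.

Lemma propS_rcons (s : seq (event R H)) b m :
  propS (rcons s (b, m)) = if b then m |: propS s else propS s.
Proof.
apply/setP => x; case: b; rewrite !inE mem_rcons in_cons //=.
Qed.

Lemma rejS_rcons (s : seq (event R H)) b m :
  rejS (rcons s (b, m)) = if b then rejS s else m |: rejS s.
Proof.
apply/setP => x; case: b; rewrite !inE mem_rcons in_cons //=.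
Qed.

Lemma ousted_mono (I : instance R H) (M M' : {set match_t R H}) m :
  M \subset M' -> ousted q I M m -> ousted q I M' m.
Proof.
case: m => r h /subsetP sub; rewrite /ousted /= => /and3P[mM c1 c2].
have sc : forall s, count (fun r' => (r', h) \in M) s <= count (fun r' => (r', h) \in M') s.
  by move=> s; apply: sub_count => x /sub.
apply/and3P; split; first exact: sub.
  exact: leq_trans c1 (sc _).
case/orP: c2 => [->//| c]; apply/orP; right; exact: leq_trans c (sc _).
Qed.

Definition inv (I : instance R H) (s : seq (event R H)) :=
  [/\ forall m, m \in rejS s -> ousted q I (propS s) m,
      forall r h, (r, h) \in propS s -> h \in rlist I r &
      forall r h h', (r, h') \in propS s -> h \in rlist I r ->
        index h (rlist I r) < index h' (rlist I r) -> (r, h) \in rejS s].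

Lemma feasible_inv (I : instance R H) s : feasible q I s -> inv I s.
Proof.
elim/last_ind: s => [|s e IH].
  by move=> _; split=> [m|r h|r h h']; rewrite inE.
rewrite /feasible feasible_rcons => /andP[fs st].
have [i1 i2 i3] := IH fs.
case: e st => [[] [r h]] st; rewrite /inv propS_rcons rejS_rcons /=.
- move: st => /and4P[_ _ hr hall]; split.
  + move=> m /i1; apply: ousted_mono; exact: subsetUr.
  + move=> r' h'; rewrite in_setU1 => /orP[/eqP[-> ->]//|]; exact: i2.
  + move=> r' h1 h'; rewrite in_setU1 => /orP[/eqP[-> ->] h1r lt|]; last exact: i3.
    by move/allP: hall; apply; rewrite in_take.
- move: st => /andP[ou _]; split.
  + move=> m; rewrite in_setU1 => /orP[/eqP->//|]; exact: i1.
  + exact: i2.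
  + move=> r' h1 h' p1 h1r lt; rewrite in_setU1 (i3 _ _ _ p1 h1r lt) orbT //.
Qed.

Lemma feasible_uniq (I : instance R H) s : feasible q I s -> uniq s.
Proof.
elim/last_ind: s => [//|s e IH].
rewrite /feasible feasible_rcons => /andP[fs st].
rewrite rcons_uniq IH // andbT.
case: e st => [[] [r h]] /=.
  by case/and4P => _; rewrite inE.
by case/andP => _; rewrite inE.
Qed.

Lemma exists_maximal (I : instance R H) : exists t, maximal q I t.
Proof.
suff: forall n s, feasible q I s -> #|{: event R H}| - size s <= n ->
        exists t, maximal q I t.
  by move/(_ #|{: event R H}| [::] isT); apply; rewrite subn0.
elim=> [|n IH] s fs hn;
  (case mx: [forall e : event R H, ~~ feasible q I (rcons s e)];
   first by exists s; rewrite /maximal fs mx);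
  move/negbT: mx => /forallPn[e]; rewrite negbK => fe;
  have := card_uniqP (feasible_uniq fe); rewrite size_rcons => cs;
  have le : size s < #|{: event R H}| by rewrite -cs; exact: max_card.
  lia.
apply: (IH (rcons s e) fe); rewrite size_rcons; lia.
Qed.

Lemma confl (I J : instance R H) t :
  (forall r, rlist J r = rlist I r) ->
  (forall (M : {set match_t R H}) m, ousted q I M m -> ousted q J M m) ->
  maximal q J t -> forall s, feasible q I s ->
  propS s \subset propS t /\ rejS s \subset rejS t.
Proof.
move=> Hr Ho /andP[ft /forallP mt].
have [j1 j2 j3] := feasible_inv ft.
have rp : forall m, m \in rejS t -> m \in propS t.
  by move=> [r h] /j1; rewrite /ousted => /and3P[].
elim/last_ind => [|s e IH].
  by move=> _; split; apply/subsetP => x; rewrite inE.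
rewrite /feasible feasible_rcons => /andP[fs st].
have [/subsetP ps /subsetP rs] := IH fs.
case: e st => [[] [r h]] st; rewrite ?cat0s in st; rewrite propS_rcons rejS_rcons /=.
- split; last by apply/subsetP.
  apply/subsetP => x; rewrite in_setU1 => /orP[/eqP->|]; last exact: ps.
  case pt: ((r, h) \in propS t) => //.
  move: st => /and4P[_ _ hr hall].
  have := mt (true, (r, h)); rewrite /feasible feasible_rcons -/(feasible q J t) ft /=.
  rewrite pt Hr hr /=.
  have -> : all (fun h' => (r, h') \in rejS t) (take (index h (rlist I r)) (rlist I r)).
    by apply/allP => y /(allP hall) /rs.
  rewrite andbT negbK inE => /existsP[h2]; rewrite inE.
  case/andP => nrej prop.
  have h2r : h2 \in rlist I r by rewrite -Hr; exact: j2 prop.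
  case: (ltngtP (index h2 (rlist I r)) (index h (rlist I r))) => c.
  + have : (r, h2) \in rejS s by apply: (allP hall); rewrite in_take.
    by move/rs; rewrite (negbTE nrej).
  + have := j3 r h h2 prop; rewrite Hr => /(_ hr c) /rp; by rewrite pt.
  + have e2 : h2 = h by exact: (index_inj h h2r hr c).
    by move: prop; rewrite e2 pt.
- split; first by apply/subsetP.
  apply/subsetP => x; rewrite in_setU1 => /orP[/eqP->|]; last exact: rs.
  move: st => /andP[ou _].
  have ou' : ousted q J (propS t) (r, h) by apply: Ho; apply: ousted_mono ou; apply/subsetP.
  apply/negPn/negP => nr.
  have := mt (false, (r, h)); rewrite /feasible feasible_rcons -/(feasible q J t) ft cat0s.
  move/negP; apply; change (true && (ousted q J (propS t) (r,h) && ((r,h) \notin rejS t))).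
  by rewrite ou' nr.
Qed.


Lemma pbP (P : Prop) : pb P = true <-> P.
Proof. by rewrite /pb; case: excluded_middle_informative. Qed.

Lemma maxI (I : instance R H) t : maximal q I t ->
  propI q I = propS t /\ rejI q I = rejS t.
Proof.
move=> mt; have ft : feasible q I t by case/andP: mt.
split; apply/setP => m; rewrite inE; apply/idP/idP.
- move/pbP => [s [ms hs]]; have fs : feasible q I s by case/andP: ms.
  by have [/subsetP + _] := confl (fun r => erefl) (fun M m h => h) mt fs; apply.
- by move=> hm; apply/pbP; exists t.
- move/pbP => [s [ms hs]]; have fs : feasible q I s by case/andP: ms.
  by have [_ /subsetP] := confl (fun r => erefl) (fun M m h => h) mt fs; apply.
- by move=> hm; apply/pbP; exists t.
Qed.

Definition Pr (I : instance R H) : {set match_t R H} := [set m | m.2 \in rlist I m.1].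
Definition Oset (I : instance R H) : {set match_t R H} := [set m | ousted q I (Pr I) m].

Lemma tent_char (I : instance R H) : resident_minimal q I ->
  propI q I = Pr I /\ rejI q I = Oset I.
Proof.
move=> Imin.
have e1 : propI q I = Pr I by apply/setP => [[r h]]; rewrite [in RHS]inE Imin.
split=> //.
have [t mt] := exists_maximal I.
have [ep er] := maxI mt.
have [ft /forallP mx] := andP mt.
have [j1 _ _] := feasible_inv ft.
rewrite er; apply/setP => m; rewrite [m \in Oset I]inE; apply/idP/idP.
  by move/j1; rewrite -ep e1.
move=> ou; apply/negPn/negP => nr.
have := mx (false, m); rewrite /feasible feasible_rcons -/(feasible q I t) ft cat0s.
move/negP; apply; case: m ou nr => r h ou nr.
change (true && (ousted q I (propS t) (r,h) && ((r,h) \notin rejS t))).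
by rewrite -ep e1 ou nr.
Qed.

Lemma tentE (I : instance R H) m : resident_minimal q I ->
  (m \in tentI q I) = (m \in Pr I) && ~~ ousted q I (Pr I) m.
Proof.
move=> Imin; have [ep er] := tent_char Imin.
by rewrite /tentI ep er !inE andbC.
Qed.

Lemma tent_uniq (I : instance R H) r h h' : resident_minimal q I ->
  (r, h) \in tentI q I -> (r, h') \in tentI q I -> h = h'.
Proof.
move=> Imin.
have [t mt] := exists_maximal I.
have [ep er] := maxI mt.
have [ft _] := andP mt.
have [j1 j2 j3] := feasible_inv ft.
rewrite /tentI ep er !in_setD => /andP[n1 p1] /andP[n2 p2].
have hr := j2 _ _ p1; have h'r := j2 _ _ p2.
case: (ltngtP (index h (rlist I r)) (index h' (rlist I r))) => c.
- by rewrite (j3 _ _ _ p2 hr c) in n1.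
- by rewrite (j3 _ _ _ p1 h'r c) in n2.
- exact: (index_inj h hr h'r c).
Qed.

Lemma resmin_ext (I J : instance R H) : resident_minimal q I ->
  (forall r, rlist J r = rlist I r) ->
  (forall (M : {set match_t R H}) m, ousted q I M m -> ousted q J M m) ->
  resident_minimal q J.
Proof.
move=> Imin Hr Ho r h.
have [t mt] := exists_maximal I.
have [t' mt'] := exists_maximal J.
have [ep _] := maxI mt; have [ep' _] := maxI mt'.
have [ft _] := andP mt; have [ft' _] := andP mt'.
have [_ j2 _] := feasible_inv ft'.
rewrite ep'; apply/idP/idP; first exact: j2.
rewrite Hr -Imin ep => hp.
by have [/subsetP + _] := confl Hr Ho mt' ft; apply.
Qed.

Lemma count_take_le (T : eqType) (a : pred T) n (s : seq T) :
  count a (take n s) <= count a s.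
Proof. by rewrite -{2}(cat_take_drop n s) count_cat leq_addr. Qed.

Lemma oust_ext (I J : instance R H) (M : {set match_t R H}) r h :
  prefix (hlist I h) (hlist J h) -> ousted q I M (r, h) -> ousted q J M (r, h).
Proof.
case/prefixP => s2 E; rewrite /ousted /= E => /and3P[mM c1 c2].
pose p := fun r' : R => (r', h) \in M.
rewrite -/p in c1 c2 *.
have cc : count p (hlist I h) <= count p (hlist I h ++ s2) by rewrite count_cat leq_addr.
rewrite mM (leq_trans c1 cc) /=.
case rL: (r \in hlist I h).
  move: c2; rewrite rL /= => c2; apply/orP; right.
  by rewrite index_cat rL take_cat index_mem rL.
apply/orP; right; rewrite index_cat rL take_cat ltnNge leq_addr /=.
by apply: (leq_trans c1); rewrite count_cat leq_addr.
Qed.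

Lemma oust_ext2 (I J : instance R H) (M : {set match_t R H}) r h :
  prefix (hlist I h) (hlist J h) -> r \in hlist I h ->
  ousted q J M (r, h) -> ousted q I M (r, h).
Proof.
case/prefixP => s2 E rL; rewrite /ousted /= E => /and3P[mM _ c2].
move: c2; rewrite mem_cat rL /= index_cat rL take_cat index_mem rL => c2.
by rewrite mM /= c2 (leq_trans c2 (count_take_le _ _ _)).
Qed.


Lemma reshE h (M : {set match_t R H}) r : (r \in resh h M) = ((r, h) \in M).
Proof. by rewrite inE. Qed.

Lemma resSE (M : {set match_t R H}) r : (r \in resS M) = [exists h, (r, h) \in M].
Proof. by rewrite inE. Qed.

Lemma tgsE (P X : {set match_t R H}) m :
  (m \in tgs P X) = (m \in X) && (m.1 \notin resS P).
Proof. by rewrite /tgs in_set. Qed.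

Lemma pendE (I : instance R H) m :
  (m \in pendI q I) = (m \in tentI q I) && (m.1 \notin hlist I m.2).
Proof. by rewrite /pendI in_set. Qed.

Lemma back (I I' : instance R H) (P Y : {set match_t R H}) r0 h0 :
  resident_minimal q I -> resident_minimal q I' -> extension I I' ->
  resident_changeless I I' -> hospital_complete I' ->
  prescription q I' P Y -> (r0, h0) \in tgs P Y ->
  prescription q I P (Y :|: (tentI q I :\: tentI q I')) /\
  (r0, h0) \in tgs P (Y :|: (tentI q I :\: tentI q I')).
Proof.
move=> Imin I'min [eR eH] Hch Hcomp [P1 P2 P3 P4 [P5 P6]] tg.
have hPr : Pr I' = Pr I by apply/setP=> m; rewrite !inE Hch.
have [pI _] := tent_char Imin. have [pI' _] := tent_char I'min. rewrite hPr in pI'.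
have tT : forall m, (m \in tentI q I) = (m \in Pr I) && ~~ ousted q I (Pr I) m.
  by move=> m; rewrite tentE.
have tT' : forall m, (m \in tentI q I') = (m \in Pr I) && ~~ ousted q I' (Pr I) m.
  by move=> m; rewrite tentE // hPr.
have F1 : forall m, ousted q I (Pr I) m -> ousted q I' (Pr I) m.
  by move=> [r h]; apply: oust_ext.
have F2 : forall m, m.1 \in hlist I m.2 -> ousted q I' (Pr I) m -> ousted q I (Pr I) m.
  by move=> [r h]; apply: oust_ext2.
have hD' : pendI q I' = set0.
  by apply/setP => m; rewrite pendE Hcomp andbF inE.
rewrite hD' in P6.
have T'T : forall m, m \in tentI q I' -> m \in tentI q I.
  move=> m; rewrite tT tT' => /andP[-> /negP h]; apply/negP => /F1; exact: h.
have ED : forall m, m \in tentI q I -> m \notin tentI q I' -> m.1 \notin hlist I m.2.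
  move=> m; rewrite tT tT' => /andP[pm no]; rewrite pm /= negbK => o'.
  by apply/negP => hl; rewrite (F2 m hl o') in no.
have TD : forall m, m \in tentI q I -> m.1 \in hlist I m.2 -> m \in tentI q I'.
  move=> m mT hl; apply/negPn/negP => n.
  by have := ED m mT n; rewrite hl.
have YT' : forall m, m \in Y -> m \in tentI q I' by move=> m; apply: (subsetP P3).
have Xm : forall m, (m \in Y :|: (tentI q I :\: tentI q I')) =
    (m \in Y) || ((m \in tentI q I) && (m \notin tentI q I')).
  by move=> m; rewrite in_setU in_setD andbC.
split; last first.
  by move: tg; rewrite !tgsE Xm => /andP[-> ->].
split.
- by rewrite pI -pI'.
- exact: P2.
- by apply/subsetP => m; rewrite Xm => /orP[/YT' /T'T // | /andP[]].
- apply/subsetP => r; rewrite in_setI => /andP[rP]; rewrite resSE => /existsP[h rh].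
  case rh': ((r, h) \in tentI q I').
    have : r \in resS P :&: resS (tentI q I') by rewrite in_setI rP resSE; apply/existsP; exists h.
    move/(subsetP P4); rewrite !resSE => /existsP[h' yh]; apply/existsP; exists h'.
    by rewrite Xm yh.
  by rewrite resSE; apply/existsP; exists h; rewrite Xm rh rh' orbT.
split.
- move=> h.
  have eqs : resh h (P :|: (tentI q I :\: (Y :|: (tentI q I :\: tentI q I')))) =
             resh h (P :|: (tentI q I' :\: Y)).
    apply/setP => r; rewrite !reshE; move: (T'T (r, h)).
    generalize (tentI q I) (tentI q I') => A B.
    rewrite !(in_setU, in_setD).
    case: ((r, h) \in B); case: ((r, h) \in A);
      case: ((r, h) \in Y); case: ((r, h) \in P) => //=; by move/(_ isT).
  rewrite eqs; have [le eqq] := P5 h; split => // ne.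
  case: (boolP (resh h Y == set0)) => [/eqP Y0 | /eqq //].
  apply/eqP; rewrite eqn_leq le /=.
  case/set0Pn: ne => e; rewrite reshE Xm.
  have eY : (e, h) \notin Y.
    apply/negP => ey; suff : e \in resh h Y by rewrite Y0 inE.
    by rewrite reshE.
  rewrite (negbTE eY) /= => /andP[eT eT'].
  move: eT eT'; rewrite tT tT' => /andP[pe _]; rewrite pe /= negbK.
  rewrite /ousted /= => /and3P[_ c1 _].
  have := count_first (fun x => (x, h) \in Pr I) (q h) (hlist_uniq I' h).
  rewrite (minn_idPl c1) => <-.
  apply: count_le_card; first exact: hlist_uniq.
  move=> x _ /andP[px cx]; rewrite reshE in_setU in_setD; apply/orP; right.
  apply/andP; split.
    apply/negP => xy; suff : x \in resh h Y by rewrite Y0 inE.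
    by rewrite reshE.
  rewrite tT' px /= /ousted /= Hcomp /=; apply/negP => /and3P[_ _]; by rewrite leqNgt cx.
- move=> h; have [P6a P6b] := P6 h.
  have [s2 E] : exists s2, hlist I' h = hlist I h ++ s2 by apply/prefixP.
  have Xb : forall b, b \in resh h ((Y :|: (tentI q I :\: tentI q I')) :\: pendI q I) ->
      ((b, h) \in Y) && (b \in hlist I h).
    move=> b; rewrite reshE in_setD pendE Xm negb_and negbK /=.
    case/andP => + bX; case/orP => [/negbTE nT|bL].
      by move: bX; rewrite nT /= orbF => /YT' /T'T; rewrite nT.
    rewrite bL andbT; case/orP: bX => // /andP[bT bT'].
    by have := ED _ bT bT'; rewrite bL.
  split.
  + move=> a b ha /Xb /andP[bY bL].
    suff : precedes (hlist I' h) a b by rewrite E => /(prec_cat_back bL) /andP[].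
    apply: P6a; last by rewrite reshE in_setD inE.
    move: ha; rewrite !reshE !in_setU (in_setD _ (Y :|: _)) (in_setD (tentI q I)) pendE Xm negb_or negb_and /= => /orP[->//|].
    case/andP => /andP[aY _] /andP[aD aT]; apply/orP; right.
    rewrite setD0 inE aY /=; apply: TD => //; move: aD; rewrite aT /= negbK //.
  + case/set0Pn => b /Xb /andP[bY bL].
    apply/subsetP => d; rewrite !reshE pendE => /andP[dT dL] /=.
    rewrite Xm; case dY: ((d, h) \in Y) => //=; rewrite dT /=; apply/negP => dT'.
    have : precedes (hlist I' h) d b.
      apply: P6a; last by rewrite reshE in_setD inE.
      by rewrite reshE in_setU setD0 in_setD dY dT' orbT.
    by rewrite E => /(prec_cat_back bL) /andP[]; rewrite (negbTE dL).
Qed.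


Definition rank (T X P : {set match_t R H}) h r : nat :=
  if (r, h) \in T :\: X then 0 else if (r, h) \in P then 1 else 2.

Definition fpart (I : instance R H) T X P h i :=
  [seq r <- enum R | (r \notin hlist I h) && (rank T X P h r == i)].

Definition newlist (I : instance R H) T X P h :=
  hlist I h ++ (fpart I T X P h 0 ++ (fpart I T X P h 1 ++ fpart I T X P h 2)).

Lemma mem_fpart (I : instance R H) T X P h i x :
  (x \in fpart I T X P h i) = (x \notin hlist I h) && (rank T X P h x == i).
Proof. by rewrite mem_filter mem_enum andbT. Qed.

Lemma fpart_uniq (I : instance R H) T X P h i : uniq (fpart I T X P h i).
Proof. exact/filter_uniq/enum_uniq. Qed.

Lemma newlist_uniq (I : instance R H) T X P h : uniq (newlist I T X P h).
Proof.
rewrite /newlist !cat_uniq hlist_uniq !fpart_uniq /= andbT.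
apply/and3P; split.
- apply/hasPn => x; rewrite !mem_cat !mem_fpart; by case: (x \in hlist I h).
- apply/hasPn => x; rewrite !mem_cat !mem_fpart; by case/orP => /andP[_ /eqP->]; rewrite andbF.
- apply/hasPn => x; rewrite !mem_fpart; by case/andP => [_ /eqP->]; rewrite andbF.
Qed.

Lemma newlist_complete (I : instance R H) T X P h r : r \in newlist I T X P h.
Proof.
rewrite /newlist !mem_cat !mem_fpart; case: (r \in hlist I h) => //=.
by rewrite /rank; case: ifP => _ //; case: ifP.
Qed.

Lemma setD_eq (A B X : {set match_t R H}) :
  (forall m, m \in B -> m \in A) -> (forall m, m \in A -> m \notin X -> m \in B) ->
  B :\: (X :&: B) = A :\: X.
Proof.
move=> BA AB; apply/setP => m; rewrite !inE.
move: (BA m) (AB m); case: (m \in B); case: (m \in A); case: (m \in X) => //=.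
- by move/(_ isT).
- by move=> _ /(_ isT isT).
Qed.

Lemma fwd (I : instance R H) (P X : {set match_t R H}) r0 h0 :
  resident_minimal q I -> prescription q I P X -> (r0, h0) \in tgs P X ->
  (r0, h0) \in tentI q I :\: pendI q I ->
  exists (I' : instance R H) (Y : {set match_t R H}),
      [/\ extension I I', resident_changeless I I', hospital_complete I'
        & [/\ resident_minimal q I', prescription q I' P Y
            & (r0, h0) \in tgs P Y]].
Proof.
move=> Imin [P1 P2 P3 P4 [P5 P6]] tg r0T.
pose I' := @Instance R H (rlist I) (newlist I (tentI q I) X P)
  (@rlist_uniq _ _ I) (newlist_uniq I (tentI q I) X P).
have hl : forall h, hlist I' h = newlist I (tentI q I) X P h by [].
have ext : extension I I'.
  by split=> [r|h]; [exact: prefix_refl | rewrite hl; exact: prefix_prefix].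
have comp : hospital_complete I' by move=> h r; rewrite hl newlist_complete.
have I'min : resident_minimal q I'.
  by apply: (resmin_ext Imin) => // M [r h]; apply: oust_ext; case: ext => _; apply.
have [pI _] := tent_char Imin. have [pI' _] := tent_char I'min.
have tT : forall m, (m \in tentI q I) = (m \in Pr I) && ~~ ousted q I (Pr I) m.
  by move=> m; rewrite tentE.
have tT' : forall m, (m \in tentI q I') = (m \in Pr I) && ~~ ousted q I' (Pr I) m.
  by move=> m; rewrite tentE.
have F1 : forall m, ousted q I (Pr I) m -> ousted q I' (Pr I) m.
  by move=> [r h]; apply: oust_ext; case: ext => _; apply.
have F2 : forall m, m.1 \in hlist I m.2 -> ousted q I' (Pr I) m -> ousted q I (Pr I) m.
  by move=> [r h]; apply: oust_ext2; case: ext => _; apply.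
have hD' : pendI q I' = set0.
  by apply/setP => m; rewrite pendE comp andbF inE.
have T'T : forall m, m \in tentI q I' -> m \in tentI q I.
  move=> m; rewrite tT tT' => /andP[-> /negP h]; apply/negP => /F1; exact: h.
have TD : forall m, m \in tentI q I -> m.1 \in hlist I m.2 -> m \in tentI q I'.
  move=> m; rewrite tT tT' => /andP[-> no] hl1 /=; apply/negP => /(F2 _ hl1).
  exact/negP.
have XT : forall m, m \in X -> m \in tentI q I by move=> m; apply: (subsetP P3).
have TPr : forall m, m \in tentI q I -> m \in Pr I by move=> m; rewrite tT => /andP[].
have LA : forall m, m \in tentI q I -> m \notin X -> m \in tentI q I'.
  move=> [r h] rT rX.
  case rL: (r \in hlist I h); first exact: TD.
  have rD : (r, h) \in pendI q I by rewrite pendE rT rL.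
  case: (boolP (resh h (X :\: pendI q I) == set0)) => [/eqP X0 | ne]; last first.
    have := (P6 h).2 ne; move/subsetP/(_ r); rewrite !reshE => /(_ rD).
    by rewrite (negbTE rX).
  have cL : count (fun x => (x, h) \in Pr I) (hlist I h) < q h.
    have := rT; rewrite tT => /andP[_]; rewrite /ousted /= rL /= andbT.
    by rewrite (TPr _ rT) /= -ltnNge.
  rewrite tT' (TPr _ rT) /= /ousted /= newlist_complete /=.
  set f0 := fpart I (tentI q I) X P h 0.
  have -> : newlist I (tentI q I) X P h = (hlist I h ++ f0) ++ (fpart I (tentI q I) X P h 1 ++ fpart I (tentI q I) X P h 2).
    exact: catA.
  have rf0 : r \in hlist I h ++ f0.
    by rewrite mem_cat mem_fpart rL /= /rank (_ : (r, h) \in tentI q I :\: X) // in_setD rX.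
  rewrite index_cat rf0 take_cat index_mem rf0.
  have u0 : uniq (hlist I h ++ f0).
    by have := newlist_uniq I (tentI q I) X P h; rewrite /newlist (catA (hlist I h)) cat_uniq => /andP[].
  set S := take _ _.
  have cS : count (fun x => (x, h) \in Pr I) S <=
            #|resh h (P :|: (tentI q I :\: X)) :\ r|.
    apply: count_le_card; first exact: take_uniq.
    move=> x xS px; rewrite in_setD1 reshE in_setU; apply/andP; split.
      apply/negP => /eqP exr; move: xS; rewrite exr /S => /index_ltn; by rewrite ltnn.
    apply/orP; right; have := mem_take xS; rewrite mem_cat => /orP[xL|].
      rewrite in_setD; apply/andP; split; last first.
        rewrite tT px /= /ousted /= xL /=. apply/negP => /and3P[_ c _].
        by move: cL; rewrite ltnNge c.
      apply/negP => xX; suff : x \in resh h (X :\: pendI q I) by rewrite X0 inE.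
      rewrite reshE in_setD xX andbT pendE /= xL andbF //.
    rewrite mem_fpart /rank => /andP[_]. by case: ifP => // _; case: ifP.
  have rA : r \in resh h (P :|: (tentI q I :\: X)) by rewrite reshE in_setU in_setD rX rT orbT.
  have := cardsD1 r (resh h (P :|: (tentI q I :\: X))); rewrite rA add1n.
  have [le _] := P5 h.
  move=> e; apply/negP => /and3P[_ _ c].
  by move: le; rewrite e => /leq_trans/(_ (leq_trans c cS)); rewrite ltnn.
have eqs : tentI q I' :\: (X :&: tentI q I') = tentI q I :\: X.
  exact: setD_eq.
exists I', (X :&: tentI q I'); split=> //; split=> //; last first.
  move: tg r0T; rewrite !tgsE /= => /andP[r0X ->]; rewrite in_setD pendE /=.
  rewrite andbT in_setI r0X /= => /andP[+ r0T]; rewrite r0T /= negbK => r0L.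
  exact: TD.
split.
- by rewrite pI'; move: P1; rewrite pI.
- exact: P2.
- exact: subsetIr.
- apply/subsetP => r; rewrite in_setI => /andP[rP]; rewrite resSE => /existsP[h rh].
  have : r \in resS P :&: resS (tentI q I).
    by rewrite in_setI rP resSE; apply/existsP; exists h; apply: T'T.
  move/(subsetP P4); rewrite !resSE => /existsP[h' xh].
  have e : h' = h by apply: (tent_uniq Imin (XT _ xh) (T'T _ rh)).
  by apply/existsP; exists h; rewrite in_setI rh andbT -e.
split.
- move=> h; rewrite eqs; have [le eqq] := P5 h; split => // ne; apply: eqq.
  case/set0Pn: ne => x; rewrite reshE in_setI => /andP[xX _].
  by apply/set0Pn; exists x; rewrite reshE.
- move=> h; rewrite hD' !setD0 eqs; split; last first.
    by move=> _; apply/subsetP => x; rewrite reshE inE.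
  move=> a b; rewrite !reshE => ha; rewrite in_setI => /andP[bX bT'].
  have bT := T'T _ bT'.
  rewrite hl /newlist.
  case bL: (b \in hlist I h).
  + have bD : b \in resh h (X :\: pendI q I).
      by rewrite reshE in_setD bX pendE bT bL.
    apply: prec_cat_l; apply: ((P6 h).1 a b) => //.
    move: ha; rewrite in_setU reshE in_setU => /orP[->//|].
    rewrite in_setD => /andP[aX aT].
    case aL: (a \in hlist I h).
      by rewrite (in_setD (tentI q I :\: pendI q I)) aX (in_setD (tentI q I)) pendE aT aL orbT.
    have aD : a \in resh h (pendI q I) by rewrite reshE pendE aT /= aL.
    have ne : resh h (X :\: pendI q I) != set0.
      by apply/set0Pn; exists b.
    by have := subsetP ((P6 h).2 ne) a aD; rewrite reshE (negbTE aX).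
  + case aL: (a \in hlist I h); first by apply: prec_cat_in; rewrite ?aL ?bL.
    have bP : (b, h) \notin P.
      apply/negP => bP; have : (b, h) \in P :&: propI q I by rewrite in_setI bP pI TPr.
      by rewrite P1 inE.
    have rb : rank (tentI q I) X P h b = 2.
      by rewrite /rank in_setD bX /= (negbTE bP).
    set f0 := fpart _ _ _ _ h 0; set f1 := fpart _ _ _ _ h 1; set f2 := fpart _ _ _ _ h 2.
    have -> : hlist I h ++ (f0 ++ (f1 ++ f2)) = (hlist I h ++ (f0 ++ f1)) ++ f2.
      by rewrite !catA.
    apply: prec_cat_in.
      rewrite !mem_cat !mem_fpart aL /= /rank.
      move: ha; rewrite in_setU => /orP[aP | ->] //; by case: ifP => //; rewrite aP.
    by rewrite !mem_cat !mem_fpart bL /= rb.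
Qed.

End Dyn.


Theorem theorem3 (R H : finType) (q : H -> nat) (q_pos : forall h, 0 < q h)
    (I : instance R H) (I_min : resident_minimal q I) (r0 : R) (h0 : H)
    (Hr0h0 : (r0, h0) \in tentI q I :\: pendI q I) :
  (exists P X : {set R * H}, prescription q I P X /\ (r0, h0) \in tgs P X) <->
  (exists (I' : instance R H) (P Y : {set R * H}),
      [/\ extension I I', resident_changeless I I', hospital_complete I'
        & [/\ resident_minimal q I', prescription q I' P Y
            & (r0, h0) \in tgs P Y]]).
Proof.
split.
- move=> [P [X [pr tg]]].
  have [I' [Y HY]] := fwd I_min pr tg Hr0h0.
  by exists I', P, Y.
- move=> [I' [P [Y [ext ch comp [I'min pr tg]]]]].
  have [pr' tg'] := back I_min I'min ext ch comp pr tg.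
  by exists P, (Y :|: (tentI q I :\: tentI q I')).
Qed.
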